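(* Let $(Y,S,\gamma)$ be a deterministic machine, i.e. there is a measurable function $f\colon Y\times S\to Y$ with $\gamma(\cdot\mid y,s)=\delta_{f(y,s)}$ for all $y\in Y$, $s\in S$. Let $H$ be a standard Borel space and let $\psi_H\colon Y\to P(H)$ and $\kappa\colon H\to P(H\times S)$ be arbitrary Markov kernels. Then $(H,\psi_H,\kappa)$ is a consistent Bayesian filtering interpretation of $\gamma$ if and only if for every $y\in Y$ and all measurable $C\subseteq H$, $A\subseteq S$, $$\psi_{S,H'}(C\times A\mid y)=\int_A \psi_H\big(C\mid f(y,s)\big)\,\psi_S(ds\mid y).$$
   Context: All measurable spaces are standard Borel; $P(X)$ denotes the set of probability measures on $X$, and a Markov kernel $k\colon X\to P(Z)$ is a measurable map, written $k(E\mid x)$ for measurable $E\subseteq Z$. A machine $(Y,S,\gamma)$ consists of measurable spaces $Y$ (states) and $S$ (inputs) and a Markov kernel $\gamma\colon Y\times S\to P(Y)$. Given a measurable space $H$ and Markov kernels $\psi_H\colon Y\to P(H)$, $\kappa\colon H\to P(H\times S)$, define the kernels $\psi_{S,H'}\colon Y\to P(H\times S)$ by $\psi_{S,H'}(E\mid y)=\int_H\kappa(E\mid h)\,\psi_H(dh\mid y)$ and $\psi_S\colon Y\to P(S)$ by $\psi_S(A\mid y)=\psi_{S,H'}(H\times A\mid y)$. The triple $(H,\psi_H,\kappa)$ is a consistent Bayesian filtering interpretation of $\gamma$ if for all $y\in Y$ and all measurable $C\subseteq H$, $A\subseteq S$, $B\subseteq Y$: $$\int_{C\times A}\gamma(B\mid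 y,s)\,\psi_{S,H'}(dh',ds\mid y)=\int_A\int_B\psi_H(C\mid y')\,\gamma(dy'\mid y,s)\,\psi_S(ds\mid y).$$ *)

(* Defs.v *)
From HB Require Import structures.
From mathcomp Require Import all_boot all_order all_algebra.
From mathcomp Require Import all_classical all_reals all_analysis.
Set Implicit Arguments. Unset Strict Implicit. Unset Printing Implicit Defensive.
Import Order.TTheory GRing.Theory Num.Theory.
Local Open Scope classical_set_scope.
Local Open Scope ring_scope.
Local Open Scope ereal_scope.

(* Standard Borel space (Kuratowski form): the measurable space T is Borel
   isomorphic to a Borel subset of the real line. *)
Definition standard_borel (R : realType) d (T : measurableType d) : Prop :=
  exists g : T -> R,
    [/\ measurable_fun [set: T] g, injective g, measurable (range g)
      & forall A : set T, measurable A -> measurable (g @` A)].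

(* psi_{S,H'}(E | y) = \int_H kappa(E | h) psi_H(dh | y) *)
Definition psiSH (R : realType) dY dH dS (Y : measurableType dY)
  (H : measurableType dH) (S : measurableType dS)
  (psiH : R.-pker Y ~> H) (kappa : R.-pker H ~> (H * S)%type) :
  Y -> {measure set (H * S)%type -> \bar R} :=
  mkcomp_noparam psiH kappa.

Definition psiS (R : realType) dY dH dS (Y : measurableType dY)
  (H : measurableType dH) (S : measurableType dS)
  (psiH : R.-pker Y ~> H) (kappa : R.-pker H ~> (H * S)%type)
  (y : Y) : set S -> \bar R :=
  fun A => psiSH psiH kappa y ([set: H] `*` A).

Definition consistent_bfi (R : realType) dY dH dS (Y : measurableType dY)
  (H : measurableType dH) (S : measurableType dS)
  (gamma : R.-pker (Y * S)%type ~> Y)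
  (psiH : R.-pker Y ~> H) (kappa : R.-pker H ~> (H * S)%type) : Prop :=
  forall (y : Y) (C : set H) (A : set S) (B : set Y),
    measurable C -> measurable A -> measurable B ->
    \int[psiSH psiH kappa y]_(z in C `*` A) gamma (y, z.2) B =
    \int[psiS psiH kappa y]_(s in A) \int[gamma (y, s)]_(y' in B) psiH y' C.

(* Main.v *)
Require Import Defs.
From HB Require Import structures.
From mathcomp Require Import all_boot all_order all_algebra.
From mathcomp Require Import all_classical all_reals all_analysis.
Import Order.TTheory GRing.Theory Num.Theory.
Local Open Scope classical_set_scope.
Local Open Scope ring_scope.
Local Open Scope ereal_scope.

Theorem mainTheorem1 (R : realType) (dY dS dH : measure_display)
  (Y : measurableType dY) (S : measurableType dS) (H : measurableType dH)
  (sbY : standard_borel R Y) (sbS : standard_borel R S)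
  (sbH : standard_borel R H)
  (gamma : R.-pker (Y * S)%type ~> Y)
  (f : (Y * S)%type -> Y) (mf : measurable_fun [set: (Y * S)%type] f)
  (hdet : forall (y : Y) (s : S) (B : set Y), measurable B ->
            gamma (y, s) B = \d_(f (y, s)) B)
  (psiH : R.-pker Y ~> H) (kappa : R.-pker H ~> (H * S)%type) :
  consistent_bfi gamma psiH kappa <->
  (forall (y : Y) (C : set H) (A : set S), measurable C -> measurable A ->
     psiSH psiH kappa y (C `*` A) =
     \int[psiS psiH kappa y]_(s in A) psiH (f (y, s)) C).
Proof.
have gd : forall y, measurable_fun [set: S] (fun s0 => f (y, s0)).
  by move=> y; have X := measurableT_comp mf (@pair1_measurable _ _ Y S y); exact: X.
split.
- move=> hc y C A mC mA.
  have := hc y C A setT mC mA measurableT.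
  have mCA : measurable (C `*` A) by exact: measurableX.
  rewrite (eq_integral (fun z => (\1_[set: (H * S)%type] z)%:E)); last first.
    move=> z _; rewrite hdet // diracE indicE !in_setT //.
  rewrite integral_indic // setTI => ->.
  congr (integral _ _ _); apply: funext => s.
  transitivity (\int[@dirac _ Y (f (y, s)) R]_(y' in [set: Y]) psiH y' C).
    apply: eq_measure_integral => B mB _ /=; by rewrite hdet.
  rewrite integral_dirac //; last exact: measurable_kernel.
  by rewrite diracE in_setT mul1e.
- move=> h y C A B mC mA mB.
  set A' := A `&` ((fun s0 => f (y, s0)) @^-1` B).
  have mA' : measurable A'.
    apply: measurableI => //; rewrite -[X in measurable X]setTI; exact: (gd y) measurableT B mB.
  have mCA : measurable (C `*` A) by exact: measurableX.
  have mE : measurable ([set: H] `*` ((fun s0 => f (y, s0)) @^-1` B)).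
    apply: measurableX => //.
    by rewrite -[X in measurable X]setTI; exact: (gd y) measurableT B mB.
  rewrite (eq_integral (fun z => (\1_([set: H] `*` ((fun s0 => f (y, s0)) @^-1` B)) z)%:E)); last first.
    move=> z _; rewrite hdet // diracE indicE.
    suff -> : (f (y, z.2) \in B) = (z \in [set: H] `*` (fun s0 => f (y, s0)) @^-1` B) by [].
    apply/idP/idP => [h1|/set_mem [_ h1]]; apply: mem_set.
      by split => //; exact: set_mem h1.
    exact: h1.
  rewrite integral_indic //.
  have -> : [set: H] `*` ((fun s0 => f (y, s0)) @^-1` B) `&` C `*` A = C `*` A'.
    by apply/seteqP; split => -[h0 s0] /=; rewrite /A' /=; tauto.
  rewrite h //.
  suff E : (fun s => psiH (f (y, s)) C) \_ A' =
      (fun s => \int[gamma (y, s)]_(y' in B) psiH y' C) \_ A.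
    by rewrite /integral E.
  apply: funext => s; rewrite !patchE.
  have -> : \int[gamma (y, s)]_(y' in B) psiH y' C =
      @dirac _ Y (f (y, s)) R B * psiH (f (y, s)) C.
    transitivity (\int[@dirac _ Y (f (y, s)) R]_(y' in B) psiH y' C).
      apply: eq_measure_integral => B0 mB0 _ /=; by rewrite hdet.
    rewrite integral_dirac //; apply: (measurable_funS measurableT) => //; exact: measurable_kernel.
  have eA' : (s \in A') = (s \in A) && (f (y, s) \in B).
    apply/idP/andP => [/set_mem [h1 h2]|[/set_mem h1 /set_mem h2]].
      by split; apply: mem_set.
    by apply: mem_set.
  rewrite diracE eA'.
  by case: (s \in A); case: (f (y, s) \in B) => /=; rewrite ?mul1e ?mul0e.
Qed.
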